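(* Let $X$ be a real Banach space, $F$ a non-empty closed bounded subset of $X$, and $x\in X$ with $Q_F(x)\neq\emptyset$. The following are equivalent. (1) $F$ is sup-compact at $x$. (2) $Q_F(x)$ is compact and $Q_F(x,\frac1n)\xrightarrow{V}Q_F(x)$. (3) $Q_F(x)$ is compact and $Q_F(x,\frac1n)\xrightarrow{H}Q_F(x)$. (4) $Q_F(x)$ is compact and $F$ is strongly remotal at $x$. (5) $\alpha(Q_F(x,\frac1n))\to0$.
   Context: $B_X$ is the closed unit ball. $r(F,x)=\sup_{y\in F}\|x-y\|$, $Q_F(x,\delta)=\{y\in F:\|x-y\|\ge r(F,x)-\delta\}$ for $\delta\ge0$, $Q_F(x)=Q_F(x,0)$. $F$ is sup-compact at $x$ if every sequence $(y_n)$ in $F$ with $\|x-y_n\|\to r(F,x)$ has a subsequence converging to an element of $F$. $F$ is strongly remotal at $x$ if for every $\epsilon>0$ there is $\delta>0$ with $Q_F(x,\delta)\subseteq Q_F(x)+\epsilon B_X$. For closed bounded sets $C_n,C_0$: $C_n\xrightarrow{V}C_0$ means both (a) for every open $U\supseteq C_0$, eventually $C_n\subseteq U$, and (b) for every open $U$ with $C_0\cap U\ne\emptyset$, eventually $C_n\cap U\neq\emptyset$; $C_n\xrightarrow{H}C_0$ means for every $\epsilon>0$, eventually $C_n\subseteq C_0+\epsilon B_X$ and $C_0\subseteq C_n+\epsilon B_X$. $\alpha(A)=\inf\{\epsilon>0:A\subseteq E+\epsilon B_X$ for some finite $E\subseteq X\}$. *)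

(* Defs.v *)
From HB Require Import structures.
From mathcomp Require Import all_boot all_order all_algebra.
From mathcomp Require Import all_classical all_reals all_analysis.
Set Implicit Arguments. Unset Strict Implicit. Unset Printing Implicit Defensive.
Import Order.TTheory GRing.Theory Num.Theory.
Import numFieldNormedType.Exports.
Local Open Scope classical_set_scope.
Local Open Scope ring_scope.

Section Defs.
Context {R : realType} {X : normedModType R}.

Definition farthest_radius (F : set X) (x : X) : R :=
  sup [set `|x - y| | y in F].

Definition Qset (F : set X) (x : X) (delta : R) : set X :=
  [set y | F y /\ farthest_radius F x - delta <= `|x - y|].

Definition sup_compact_at (F : set X) (x : X) : Prop :=
  forall u : nat -> X, (forall n, F (u n)) ->
    (fun n => `|x - u n|) @ \oo --> farthest_radius F x ->
    exists phi : nat -> nat, {homo phi : m n / (m < n)%N >-> (m < n)%N} /\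
      exists2 y, F y & (fun n => u (phi n)) @ \oo --> y.

Definition enlarge (A : set X) (e : R) : set X :=
  [set z | exists2 a, A a & `|z - a| <= e].

Definition strongly_remotal_at (F : set X) (x : X) : Prop :=
  forall eps : R, 0 < eps -> exists2 delta : R, 0 < delta &
    Qset F x delta `<=` enlarge (Qset F x 0) eps.

Definition vietoris_cvg (C : nat -> set X) (C0 : set X) : Prop :=
  (forall U : set X, open U -> C0 `<=` U -> \forall n \near \oo, C n `<=` U) /\
  (forall U : set X, open U -> C0 `&` U !=set0 ->
     \forall n \near \oo, C n `&` U !=set0).

Definition hausdorff_cvg (C : nat -> set X) (C0 : set X) : Prop :=
  forall eps : R, 0 < eps -> \forall n \near \oo,
    C n `<=` enlarge C0 eps /\ C0 `<=` enlarge (C n) eps.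

Definition kuratowski_alpha (A : set X) : R :=
  inf [set e : R | 0 < e /\ exists E : set X, finite_set E /\ A `<=` enlarge E e].

End Defs.

(* Main.v *)
Require Import Defs.
From HB Require Import structures.
From mathcomp Require Import all_boot all_order all_algebra.
From mathcomp Require Import all_classical all_reals all_analysis.
Import Order.TTheory GRing.Theory Num.Theory.
Import numFieldNormedType.Exports.
Local Open Scope classical_set_scope.
Local Open Scope ring_scope.

Section S.
Context {R : realType} {X : normedModType R}.
Implicit Types (F : set X) (x : X).

Lemma bnd_le F : bounded_set F -> exists M : R, 0 < M /\ forall y, F y -> `|y| <= M.
Proof.
move=> [M [Mr HM]]; exists (`|M| + 1); split; first by rewrite ltr_wpDl.
move=> y Fy; apply: HM => //; rewrite (le_lt_trans (real_ler_norm Mr))//.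
by rewrite ltrDl.
Qed.

Lemma rad_ub F x y : bounded_set F -> F y -> `|x - y| <= farthest_radius F x.
Proof.
move=> /bnd_le [M [M0 HM]] Fy.
suff hs : has_sup [set `|x - y| | y in F] by apply: (sup_upper_bound hs); exists y.
split; first by exists `|x - y|, y.
exists (`|x| + M) => _ [z Fz <-]; rewrite (le_trans (ler_normB _ _))// lerD2l.
exact: HM.
Qed.

Lemma Qset_sub F x d d' : d <= d' -> Qset F x d `<=` Qset F x d'.
Proof. by move=> dd y [Fy h]; split => //; rewrite (le_trans _ h)// lerB. Qed.

Lemma Qset0_sub F x d : 0 <= d -> Qset F x 0 `<=` Qset F x d.
Proof. exact: Qset_sub. Qed.

Lemma Qset_subF F x d : Qset F x d `<=` F.
Proof. by move=> y []. Qed.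

Lemma inv_le (m n : nat) : (m <= n)%N -> (n.+1%:R : R)^-1 <= (m.+1%:R)^-1.
Proof. by move=> mn; rewrite lef_pV2 ?posrE// ler_nat. Qed.

Lemma closed_Qset F x d : closed F -> closed (Qset F x d).
Proof.
move=> cF; have -> : Qset F x d = F `&` ((fun z => `|x - z|) @^-1` [set t | farthest_radius F x - d <= t]).
  by apply/seteqP; split => z [].
apply: closedI => //; apply: preimage_closed; last exact: closed_ge.
move=> z _; apply: cvg_norm; apply: cvgB => //; exact: cvg_cst.
Qed.

Lemma Qset_cap F x a : (forall k : nat, Qset F x (k.+1%:R)^-1 a) -> Qset F x 0 a.
Proof.
move=> H; split; first by case: (H 0%N).
rewrite subr0; apply/ler_addgt0Pr => e e0.
have [k ke] : exists k : nat, (k.+1%:R : R)^-1 <= e.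
  by have [k] := ltr_add_invr e0; rewrite add0r => /ltW; exists k.
by have [_ h] := H k; rewrite -lerBlDr (le_trans _ h)// lerB.
Qed.


Lemma Qn_cvg F x (y : nat -> X) : bounded_set F ->
  (forall n, Qset F x (n.+1%:R)^-1 (y n)) ->
  (fun n => `|x - y n|) @ \oo --> farthest_radius F x.
Proof.
move=> bF Hy; apply/cvgrPdist_le => e e0.
have [k ke] := ltr_add_invr e0; rewrite add0r in ke.
exists k => // n /= kn; have [Fy h] := Hy n.
have h2 := @rad_ub F x (y n) bF Fy.
rewrite ger0_norm ?subr_ge0// lerBlDr -lerBlDl (le_trans _ h)// lerB//.
by rewrite (le_trans (inv_le _ _ kn)) ?ltW.
Qed.

Lemma subseq_cvg (u : nat -> X) (a : X) :
  (forall e : R, 0 < e -> forall n, exists2 p, (n <= p)%N & `|a - u p| <= e) ->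
  exists phi : nat -> nat, {homo phi : m n / (m < n)%N >-> (m < n)%N} /\
    (fun n => u (phi n)) @ \oo --> a.
Proof.
move=> H; pose v := fun n => `|a - u n|.
have : cluster (v @ \oo) 0.
  apply/cluster_eventuallyP => e n e0; have [p np h] := H e e0 n.
  by exists p => //; rewrite sub0r normrN /v normr_id.
move=> /cluster_eventually_cvg [f incf vf]; exists f; split.
  by move=> m n mn; rewrite ltnNge -leEnat incf -ltnNge.
apply/cvgrPdist_le => e e0; move/cvgrPdist_le : vf => /(_ e e0).
apply: filterS => n /=; rewrite /v /= sub0r normrN normr_id; exact.
Qed.

Lemma cluster_en (u : nat -> X) (a : X) : cluster (u @ \oo) a ->
  forall e : R, 0 < e -> forall n, exists2 p, (n <= p)%N & `|a - u p| <= e.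
Proof.
move=> cl e e0 n; apply/not_exists2P => H.
have Aev : (u @ \oo) [set z | e < `|a - z|].
  exists n => // p /= np; have := H p; rewrite np /= => -[//|/negP].
  by rewrite -ltNge.
have [z [/= ez bz]] := cl _ _ Aev (nbhsx_ballx a _ e0).
by move: bz; rewrite -ball_normE /ball_ /= => bz; have := lt_trans ez bz; rewrite ltxx.
Qed.

Lemma homo_ge (phi : nat -> nat) : {homo phi : m n / (m < n)%N >-> (m < n)%N} ->
  forall n, (n <= phi n)%N.
Proof.
move=> h; elim => // n ih; have := h n n.+1 (ltnSn n).
by apply: leq_ltn_trans.
Qed.

Lemma extract F x (y : nat -> X) (C : set X) : bounded_set F -> closed F ->
  sup_compact_at F x -> (forall n, Qset F x (n.+1%:R)^-1 (y n)) ->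
  closed C -> (forall n, C (y n)) -> exists a, Qset F x 0 a /\ C a.
Proof.
move=> bF cF sc Hy cC HC.
have [phi [hphi [a Fa ya]]] := sc y (fun n => (Hy n).1) (@Qn_cvg F x y bF Hy).
exists a; split; last first.
  by apply: (closed_cvg _ cC _ _ ya); apply: nearW => n; exact: HC.
apply: Qset_cap => k; apply: (closed_cvg _ (@closed_Qset F x _ cF) _ _ ya).
exists k => // n /= kn; apply: (@Qset_sub F x _ _ _ _ (Hy _)); apply: inv_le.
exact: (leq_trans kn (@homo_ge phi hphi n)).
Qed.

End S.

Section T.
Context {R : realType} {X : completeNormedModType R}.

Lemma ultra_seq (U : set_system X) (P : X -> set X) (s : seq X) : UltraFilter U ->
  U (fun z => exists2 c, c \in s & P c z) -> exists c, U (P c).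
Proof.
move=> UF; elim: s => [|c s ih] H.
  exfalso; apply: (@filter_not_empty _ U); apply: filterS H => z [c].
  by rewrite in_nil.
have [Uc|Unc] := in_ultra_setVsetC (P c) UF; first by exists c.
apply: ih; apply: filterS (filterI H Unc) => z [[c' + Pz] nPz].
rewrite in_cons => /orP [/eqP cc|cs]; last by exists c'.
by exfalso; apply: nPz; rewrite -cc.
Qed.

Lemma TB_cluster (A : set X) :
  (forall e : R, 0 < e -> exists E, finite_set E /\ A `<=` enlarge E e) ->
  forall G : set_system X, ProperFilter G -> G A -> exists l, cluster G l.
Proof.
move=> TB G PG GA; have [U [UU GU]] := ultraFilterLemma PG.
have UA := GU _ GA.
have cU : cauchy U.
  apply: cauchy_exP => eps eps0.
  have [E [fE AE]] := TB (eps / 2) (divr_gt0 eps0 (ltr0Sn _ 1)).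
  have [s Es] := proj1 (finite_seqP E) fE.
  apply: (@ultra_seq U (fun c => ball c eps) s UU).
  apply: filterS UA => z /AE [c Ec zc]; exists c; first by rewrite Es in Ec.
  rewrite -ball_normE /ball_ /= distrC (le_lt_trans zc)//.
  by rewrite ltr_pdivrMr// ltr_pMr// ltr1n.
have cvU : cvg U by apply: cauchy_cvg.
exists (lim U) => A' B GA' nB.
have UB : U B by apply: cvU.
have UAB : U (A' `&` B) by apply: filterI => //; apply: GU.
apply/set0P; apply/eqP => h; move: UAB; rewrite h; exact: filter_not_empty.
Qed.

Lemma TB_compact (A : set X) : closed A ->
  (forall e : R, 0 < e -> exists E, finite_set E /\ A `<=` enlarge E e) ->
  compact A.
Proof.
move=> cA TB G PG GA; have [l cl] := @TB_cluster A TB G PG GA.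
exists l; split => //; apply: cA => B nB; have [z [Az Bz]] := cl _ _ GA nB.
by exists z.
Qed.

End T.

Section U.
Context {R : realType} {X : normedModType R}.

Lemma enlarge_le (E : set X) (e e' : R) : e <= e' -> enlarge E e `<=` enlarge E e'.
Proof. by move=> ee z [c Ec h]; exists c => //; rewrite (le_trans h). Qed.

Lemma enlarge_sub (E E' : set X) (e : R) : E `<=` E' -> enlarge E e `<=` enlarge E' e.
Proof. by move=> EE z [c Ec h]; exists c => //; apply: EE. Qed.

Lemma enlarge_trans (E : set X) (e1 e2 : R) :
  enlarge (enlarge E e1) e2 `<=` enlarge E (e1 + e2).
Proof.
move=> z [c [d Ed h1] h2]; exists d => //.
have h3 : `|z - d| <= `|z - c| + `|c - d|.
  by rewrite (le_trans _ (ler_normD _ _))// addrA subrK.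
by rewrite (le_trans h3)// addrC lerD.
Qed.

Lemma alpha_ge0 (A : set X) : 0 <= kuratowski_alpha A.
Proof.
rewrite /kuratowski_alpha.
set S := [set e : R | _].
case: (pselect (S !=set0)) => [ne|nne].
  by apply: lb_le_inf => // e [/ltW].
rewrite (_ : S = set0) ?inf0 //; apply/seteqP; split => // e Se.
by exfalso; apply: nne; exists e.
Qed.

Lemma alpha_le (A E : set X) (e : R) : 0 < e -> finite_set E ->
  A `<=` enlarge E e -> kuratowski_alpha A <= e.
Proof.
move=> e0 fE AE; apply: ge_inf; last by split => //; exists E.
by exists 0 => y [/ltW].
Qed.

Lemma alpha_lt (A : set X) (e : R) : bounded_set A -> kuratowski_alpha A < e ->
  exists E, finite_set E /\ A `<=` enlarge E e.
Proof.
move=> /bnd_le [M [M0 HM]] /inf_lt [].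
  exists M; split => //; exists [set 0]; split; first exact: finite_set1.
  by move=> z Az; exists 0 => //; rewrite subr0 HM.
move=> y [y0 [E [fE AE]]] ye; exists E; split => //.
exact: (subset_trans AE (@enlarge_le E _ _ (ltW ye))).
Qed.

End U.

Section M.
Context {R : realType} {X : normedModType R}.

Fixpoint Sseq (g : nat * seq X -> X) (k : nat) : seq X :=
  if k is k'.+1 then g (k', Sseq g k') :: Sseq g k' else [::].

Lemma Sseq_mem g (j k : nat) : (j < k)%N -> g (j, Sseq g j) \in Sseq g k.
Proof.
elim: k => // k ih; rewrite ltnS leq_eqVlt => /orP [/eqP ->|jk] /=.
  by rewrite in_cons eqxx.
by rewrite in_cons ih ?orbT.
Qed.

Lemma P1_P5 (F : set X) (x : X) : bounded_set F -> sup_compact_at F x ->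
  (fun n => kuratowski_alpha (Qset F x (n.+1%:R)^-1)) @ \oo --> (0 : R).
Proof.
move=> bF sc; apply/cvgrPdist_le => e e0.
have H0 : exists (N : nat) (s : seq X), Qset F x (N.+1%:R)^-1 `<=` enlarge [set` s] e.
  case: (pselect (exists N (s : seq X), Qset F x (N.+1%:R)^-1 `<=` enlarge [set` s] e)) => // H.
  exfalso.
  have : forall ns : nat * seq X, exists y, Qset F x (ns.1.+1%:R)^-1 y /\
      forall c, c \in ns.2 -> e < `|y - c|.
    move=> [n t] /=; case: (pselect (exists y, Qset F x (n.+1%:R)^-1 y /\ forall c, c \in t -> e < `|y - c|)) => // H2; exfalso; apply: H; exists n, t => z Qz.
    case: (pselect (enlarge [set` t] e z)) => // nz; exfalso; apply: H2; exists z; split => // c ct.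
    rewrite ltNge; apply/negP => h; apply: nz; by exists c.
  move=> /choice [g Hg].
  pose y k := g (k, Sseq g k).
  have Hy k : Qset F x (k.+1%:R)^-1 (y k) by have [] := Hg (k, Sseq g k).
  have sep j k : (j < k)%N -> e < `|y k - y j|.
    by move=> jk; have [_] := Hg (k, Sseq g k); apply; apply: Sseq_mem.
  have [phi [hphi [a _ ya]]] := sc y (fun n => (Hy n).1) (@Qn_cvg _ _ F x y bF Hy).
  move/cvgrPdist_lt : ya => /(_ (e / 2) (divr_gt0 e0 (ltr0Sn _ 1))) [M _ HM].
  have h1 := HM M (leqnn M); have h2 := HM M.+1 (leqnSn M).
  have := sep _ _ (hphi M M.+1 (ltnSn M)).
  have : `|y (phi M.+1) - y (phi M)| < e.
    have -> : y (phi M.+1) - y (phi M) = (a - y (phi M)) - (a - y (phi M.+1)).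
      by rewrite opprB [in RHS]addrC addrA subrK.
    rewrite (le_lt_trans (ler_normB _ _))//.
    by rewrite [e in _ < e](splitr e) ltrD.
  by move=> /lt_trans h /h; rewrite ltxx.
have [N [s Ns]] := H0.
exists N => // n /= Nn; rewrite sub0r normrN ger0_norm ?alpha_ge0//.
apply: (@alpha_le _ _ _ [set` s]) => //.
apply: subset_trans Ns; apply: Qset_sub; exact: inv_le.
Qed.

End M.

Section C.
Context {R : realType} {X : completeNormedModType R}.

Lemma bounded_sub (A B : set X) : A `<=` B -> bounded_set B -> bounded_set A.
Proof. by move=> AB [M [Mr HM]]; exists M; split => // y My z /AB; apply: HM. Qed.

Lemma P5_compact (F : set X) (x : X) : bounded_set F -> closed F ->
  (fun n => kuratowski_alpha (Qset F x (n.+1%:R)^-1)) @ \oo --> (0 : R) ->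
  compact (Qset F x 0).
Proof.
move=> bF cF H; apply: TB_compact; first exact: closed_Qset.
move=> e e0; move/cvgrPdist_lt : H => /(_ e e0) [N _ HN].
have := HN N (leqnn N); rewrite sub0r normrN ger0_norm ?alpha_ge0// => hN.
have [E [fE QE]] := @alpha_lt R X _ e (@bounded_sub _ F (Qset_subF F x _) bF) hN.
exists E; split => //; apply: subset_trans QE; exact: Qset0_sub.
Qed.

Lemma P5_P1 (F : set X) (x : X) : bounded_set F -> closed F ->
  (fun n => kuratowski_alpha (Qset F x (n.+1%:R)^-1)) @ \oo --> (0 : R) ->
  sup_compact_at F x.
Proof.
move=> bF cF H u Fu ur.
have TB : forall e : R, 0 < e -> exists E, finite_set E /\ range u `<=` enlarge E e.
  move=> e e0; move/cvgrPdist_lt : H => /(_ e e0) [N1 _ HN1].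
  have := HN1 N1 (leqnn N1); rewrite sub0r normrN ger0_norm ?alpha_ge0// => hN.
  have [E [fE QE]] := @alpha_lt R X _ e (@bounded_sub _ F (Qset_subF F x _) bF) hN.
  move/cvgrPdist_le : ur => /(_ (N1.+1%:R^-1) ltac:(by [])) [N2 _ HN2].
  exists (E `|` [set u i | i in `I_N2]); split.
    by rewrite finite_setU; split => //; apply: finite_image; exact: finite_II.
  move=> _ [n _ <-]; case: (leqP N2 n) => nN2.
    apply: (@enlarge_sub _ _ E); first by move=> z Ez; left.
    apply: QE; split; first exact: Fu.
    have := HN2 n nN2; rewrite /= lerBlDr -lerBlDl => h; rewrite (le_trans _ h)//.
    exact: ler_norm.
  by exists (u n); [right; exists n|rewrite subrr normr0 ltW].
have Gr : (u @ \oo) (range u) by exists 0%N => // n _; exists n.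
have [l cl] := @TB_cluster _ _ (range u) TB (u @ \oo) _ Gr.
have [phi [hphi ul]] := @subseq_cvg _ _ u l (@cluster_en _ _ u l cl).
exists phi; split => //; exists l => //.
by apply: (closed_cvg _ cF _ _ ul); apply: nearW => n; exact: Fu.
Qed.

End C.
From mathcomp Require Import finmap.

Section D.
Context {R : realType} {X : normedModType R}.
Variables (F : set X) (x : X).
Let QF := Qset F x 0.
Let Qn := fun n : nat => Qset F x (n.+1%:R)^-1.

Lemma P1_V : bounded_set F -> closed F -> sup_compact_at F x -> vietoris_cvg Qn QF.
Proof.
move=> bF cF sc; split; last first.
  move=> U oU [z [Qz Uz]]; apply: nearW => n; exists z; split => //.
  exact: Qset0_sub.
move=> U oU QU.
case: (pselect (\forall n \near \oo, Qn n `<=` U)) => // H; exfalso.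
have : forall N, exists y, Qn N y /\ ~ U y.
  move=> N; case: (pselect (exists y, Qn N y /\ ~ U y)) => // H2; exfalso.
  apply: H; exists N => // n /= Nn z Qz.
  case: (pselect (U z)) => // nUz; exfalso; apply: H2; exists z; split => //.
  by apply: (@Qset_sub _ _ F x _ _ _ _ Qz); apply: inv_le.
move=> /choice [y Hy].
have [a [Qa nUa]] := @extract _ _ F x y (~` U) bF cF sc (fun n => (Hy n).1)
  (open_closedC oU) (fun n => (Hy n).2).
exact: nUa (QU _ Qa).
Qed.

Lemma V_H : vietoris_cvg Qn QF -> hausdorff_cvg Qn QF.
Proof.
move=> [VU _] eps eps0.
pose V := [set z | exists2 a, QF a & `|z - a| < eps].
have oV : open V.
  rewrite openE => z [a Qa za]; apply/nbhs_ballP.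
  exists (eps - `|z - a|); first by rewrite /= subr_gt0.
  move=> w; rewrite -ball_normE /ball_ /= => bw; exists a => //.
  rewrite (le_lt_trans (_ : _ <= `|z - w| + `|z - a|))//; last by rewrite -ltrBrDr.
  have -> : w - a = (z - a) - (z - w) by rewrite opprB [in RHS]addrC addrA subrK.
  by rewrite (le_trans (ler_normB _ _))// addrC.
have QV : QF `<=` V by move=> z Qz; exists z => //; rewrite subrr normr0.
apply: filterS (VU V oV QV) => n QnV; split.
  by move=> z /QnV [a Qa za]; exists a => //; apply: ltW.
move=> z Qz; exists z; first exact: Qset0_sub.
by rewrite subrr normr0 ltW.
Qed.

Lemma H_SR : hausdorff_cvg Qn QF -> strongly_remotal_at F x.
Proof.
move=> H eps eps0; have [N _ HN] := H eps eps0.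
by exists (N.+1%:R^-1) => //; have [] := HN N (leqnn N).
Qed.

Lemma SR_P5 : compact QF -> strongly_remotal_at F x ->
  (fun n => kuratowski_alpha (Qn n)) @ \oo --> (0 : R).
Proof.
move=> cQ SR; apply/cvgrPdist_le => e e0.
have e20 : 0 < e / 2 by rewrite divr_gt0.
have [D' _ QD] : finite_subset_cover QF (fun c : X => ball c (e / 2)) QF.
  move: cQ; rewrite compact_cover; apply.
    by move=> c _; exact: ball_open.
  by move=> z Qz; exists z => //; exact: ballxx.
have QE : QF `<=` enlarge ([set` D'] : set X) (e / 2).
  move=> z /QD [c Dc bz]; exists c => //.
  by move: bz; rewrite -ball_normE /ball_ /= distrC => /ltW.
have [d d0 Hd] := SR _ e20.
have [k kd] := ltr_add_invr d0; rewrite add0r in kd.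
exists k => // n /= kn; rewrite sub0r normrN ger0_norm ?alpha_ge0//.
apply: (@alpha_le _ _ _ ([set` D'] : set X)) => //.
rewrite [X in enlarge _ X](splitr e).
apply: (subset_trans _ (@enlarge_trans R X ([set` D'] : set X) (e/2) (e/2))).
move=> z Qz; have /Hd [c Qc zc] : Qset F x d z.
  apply: (@Qset_sub _ _ F x _ _ _ _ Qz).
  by rewrite (le_trans (inv_le _ _ kn)) ?ltW.
by exists c => //; apply: QE.
Qed.

End D.

Theorem theorem2p5 (R : realType) (X : completeNormedModType R)
  (F : set X) (x : X) :
  F !=set0 -> closed F -> bounded_set F -> Qset F x 0 !=set0 ->
  let QF := Qset F x 0 in
  let Qn := fun n : nat => Qset F x (n.+1%:R)^-1 in
  (sup_compact_at F x <-> (compact QF /\ vietoris_cvg Qn QF)) /\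
  (sup_compact_at F x <-> (compact QF /\ hausdorff_cvg Qn QF)) /\
  (sup_compact_at F x <-> (compact QF /\ strongly_remotal_at F x)) /\
  (sup_compact_at F x <-> (fun n => kuratowski_alpha (Qn n)) @ \oo --> (0 : R)).
Proof.
move=> _ cF bF _ QF Qn.
have P15 := @P1_P5 R X F x bF.
have P51 := @P5_P1 R X F x bF cF.
have cpt : sup_compact_at F x -> compact QF.
  by move=> sc; apply: (@P5_compact R X F x bF cF); apply: P15.
have V := @P1_V R X F x bF cF.
have VH := @V_H R X F x.
have HS := @H_SR R X F x.
have S5 := @SR_P5 R X F x.
split; [|split; [|split]].
- split; first by move=> sc; split; [exact: cpt|exact: V].
  by move=> [cQ hV]; apply: P51; apply: S5 => //; apply: HS; apply: VH.
- split; first by move=> sc; split; [exact: cpt|apply: VH; exact: V].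
  by move=> [cQ hH]; apply: P51; apply: S5 => //; apply: HS.
- split; first by move=> sc; split; [exact: cpt|apply: HS; apply: VH; exact: V].
  by move=> [cQ hS]; apply: P51; apply: S5.
- by split; [exact: P15|exact: P51].
Qed.
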